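(* Let $G_0$ be a fixed $n\times l$ binary matrix, $G_1$ a fixed $n\times k$ binary matrix, $\mathbf m\in\{0,1\}^k$ fixed, $t_0=\lfloor (d_0-1)/2\rfloor$, and $1\le u\le n$. Then $$P(E=0\mid U=u)\;\begin{cases}=0, & u<d_0,\\[2pt] =\dfrac12\cdot\dfrac{\sum_{w=d_0}^{u}B_{0,w}\binom{n-w}{u-w}}{\binom nu}, & d_0\le u\le d_0+t_0,\\[6pt] \le \min\left\{\dfrac{\sum_{w=d_0}^{u}B_{0,w}\binom{n-w}{u-w}}{\binom nu},1\right\}, & u>d_0+t_0.\end{cases}$$
   Context: All arithmetic is over $\mathrm{GF}(2)$. $\mathcal C_0^{\perp}=\{\mathbf x\in\{0,1\}^n: G_0^T\mathbf x=\mathbf 0\}$; $B_{0,w}$ is the number of vectors of Hamming weight $w$ in $\mathcal C_0^\perp$, and $d_0$ is the minimum Hamming weight of a nonzero vector of $\mathcal C_0^\perp$. Defect model: each of the $n$ memory cells is independently defective with probability $\beta\in(0,1)$; a defective cell is stuck at $0$ or at $1$, each with probability $1/2$, independently. Let $\mathcal U$ be the set of defect positions, $U=|\mathcal U|$, $\mathbf s^{\mathcal U}$ the vector of stuck-at values; conditionally on $U=u$, $\mathcal U$ is a uniform random $u$-subset and $\mathbf s^{\mathcal U}$ is uniform on $\{0,1\}^u$. For a matrix $M$ (resp. vector $\mathbf v$) with rows indexed by $\{1,\dots,n\}$, $M^{\mathcal U}$ (resp. $\mathbf v^{\mathcal U}$) denotes the rows indexed by $\mathcal U$. Encoding: with $\mathbf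 b^{\mathcal U}=(G_1\mathbf m)^{\mathcal U}+\mathbf s^{\mathcal U}$, look for $\mathbf d\in\{0,1\}^l$ with $G_0^{\mathcal U}\mathbf d=\mathbf b^{\mathcal U}$; $E=1$ if such $\mathbf d$ exists and $E=0$ (encoding failure) otherwise. *)

(* Defs.v *)
From HB Require Import structures.
From mathcomp Require Import all_boot all_order all_algebra.
Set Implicit Arguments. Unset Strict Implicit. Unset Printing Implicit Defensive.
Import Order.TTheory GRing.Theory Num.Theory.
Local Open Scope ring_scope.

Definition wt (n : nat) (x : 'cV['F_2]_n) : nat := #|[set i : 'I_n | x i 0 != 0]|.

Definition in_dual (n l : nat) (G0 : 'M['F_2]_(n, l)) (x : 'cV['F_2]_n) : bool :=
  G0^T *m x == 0.

Definition B0 (n l : nat) (G0 : 'M['F_2]_(n, l)) (w : nat) : nat :=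
  #|[set x : 'cV['F_2]_n | in_dual G0 x && (wt x == w)]|.

(* s is a stuck-at pattern on the defect set S: its entries outside S are 0,
   so such s are in bijection with {0,1}^S. *)
Definition stuck_on (n : nat) (S : {set 'I_n}) (s : 'cV['F_2]_n) : bool :=
  [forall i : 'I_n, (i \notin S) ==> (s i 0 == 0)].

(* E = 1 : exists d with G0^U d = (G1 m)^U + s^U *)
Definition encodable (n l k : nat) (G0 : 'M['F_2]_(n, l)) (G1 : 'M['F_2]_(n, k))
  (m : 'cV['F_2]_k) (S : {set 'I_n}) (s : 'cV['F_2]_n) : bool :=
  [exists d : 'cV['F_2]_l,
     [forall i in S, (G0 *m d) i 0 == (G1 *m m) i 0 + s i 0]].

Definition fail_count (n l k : nat) (G0 : 'M['F_2]_(n, l)) (G1 : 'M['F_2]_(n, k))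
  (m : 'cV['F_2]_k) (u : nat) : nat :=
  \sum_(S : {set 'I_n} | #|S| == u)
     #|[set s : 'cV['F_2]_n | stuck_on S s & ~~ encodable G0 G1 m S s]|.

(* P(E = 0 | U = u): U uniform u-subset, s^U uniform on {0,1}^u *)
Definition P_fail (n l k : nat) (G0 : 'M['F_2]_(n, l)) (G1 : 'M['F_2]_(n, k))
  (m : 'cV['F_2]_k) (u : nat) : rat :=
  (fail_count G0 G1 m u)%:R / ('C(n, u) * 2 ^ u)%:R.

Definition ratio_bound (n l : nat) (G0 : 'M['F_2]_(n, l)) (d0 u : nat) : rat :=
  (\sum_(d0 <= w < u.+1) B0 G0 w * 'C(n - w, u - w))%:R / ('C(n, u))%:R.

(* Main.v *)
Require Import Defs.
From HB Require Import structures.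
From mathcomp Require Import all_boot all_order all_algebra.
Import Order.TTheory GRing.Theory Num.Theory.
Local Open Scope ring_scope.
From mathcomp Require Import zify ring.

Lemma F2_cases (x : 'F_2) : x = 0 \/ x = 1.
Proof. case: x => [[|[|i]]] Hi; [left|right|by []]; by apply/val_inj. Qed.

Lemma F2_11 : (1 + 1 : 'F_2) = 0. Proof. by apply/val_inj. Qed.
Lemma F2_10 : (1 : 'F_2) != 0. Proof. by []. Qed.

Lemma fredholm (F : fieldType) p q (A : 'M[F]_(p,q)) (c : 'cV[F]_p) :
  (forall d : 'cV_q, A *m d != c) ->
  exists v : 'cV[F]_p, A^T *m v = 0 /\ (c^T *m v) 0 0 != 0.
Proof.
move=> Hd.
have H : ~~ (c^T <= A^T)%MS.
  apply/negP => /submxP [D HD].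
  by move: (Hd D^T); rewrite -[c]trmxK HD trmx_mul trmxK eqxx.
rewrite submxE in H.
have [j Hj] : exists j, (c^T *m cokermx A^T) 0 j != 0.
  apply/existsP; apply: contraR H => /existsPn Hn.
  apply/eqP/matrixP => i j; rewrite !ord1; move: (Hn j); rewrite negbK => /eqP ->; by rewrite mxE.
exists (col j (cokermx A^T)); split.
  apply/matrixP => i k; rewrite ord1.
  transitivity ((A^T *m cokermx A^T) i j); last by rewrite mulmx_coker !mxE.
  rewrite !mxE; apply: eq_bigr => l _; by rewrite !mxE.
suff -> : (c^T *m col j (cokermx A^T)) 0 0 = (c^T *m cokermx A^T) 0 j by [].
rewrite !mxE; apply: eq_bigr => l _; by rewrite !mxE.
Qed.


Set Implicit Arguments. Unset Strict Implicit. Unset Printing Implicit Defensive.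

Definition supp n (z : 'cV['F_2]_n) : {set 'I_n} := [set i | z i 0 != 0].

Lemma supp0 n (z : 'cV['F_2]_n) (S : {set 'I_n}) i :
  supp z \subset S -> i \notin S -> z i 0 = 0.
Proof.
move=> /subsetP H iS; apply/eqP; apply/negPn; apply/negP => Hz.
by move: (H i); rewrite inE => /(_ Hz); rewrite (negbTE iS).
Qed.

Lemma enc_sound n l k (G0 : 'M['F_2]_(n, l)) (G1 : 'M['F_2]_(n, k))
  (m : 'cV['F_2]_k) S s z :
  encodable G0 G1 m S s -> in_dual G0 z -> supp z \subset S ->
  \sum_i z i 0 * ((G1 *m m) i 0 + s i 0) = 0.
Proof.
move=> /existsP [d /forallP Hd] /eqP Hz Hsupp.
transitivity (((G0^T *m z)^T *m d) 0 0); last by rewrite Hz trmx0 mul0mx mxE.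
rewrite trmx_mul trmxK -mulmxA mxE; apply: eq_bigr => i _.
rewrite [z^T _ _]mxE; case: (boolP (i \in S)) => iS.
  by move: (Hd i); rewrite iS /= => /eqP ->.
by rewrite (supp0 Hsupp iS) !mul0r.
Qed.

Lemma enc_complete n l k (G0 : 'M['F_2]_(n, l)) (G1 : 'M['F_2]_(n, k))
  (m : 'cV['F_2]_k) S s :
  ~~ encodable G0 G1 m S s -> exists z, [/\ in_dual G0 z, supp z \subset S &
  \sum_i z i 0 * ((G1 *m m) i 0 + s i 0) != 0].
Proof.
move=> Hne.
pose A := \matrix_(i < n, j < l) (if i \in S then G0 i j else 0).
pose c := \col_(i < n) (if i \in S then (G1 *m m) i 0 + s i 0 else 0).
have [|v [Hv Hcv]] := @fredholm _ _ _ A c.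
  move=> d; apply/negP => /eqP Hd; move/negP: Hne; apply.
  apply/existsP; exists d; apply/forallP => i; apply/implyP => iS.
  have := congr1 (fun M : 'cV_n => M i 0) Hd; rewrite !mxE iS => <-.
  apply/eqP; apply: eq_bigr => j _; by rewrite mxE iS.
exists (\col_i (if i \in S then v i 0 else 0)); split.
- apply/eqP/matrixP => j k'; rewrite ord1.
  transitivity ((A^T *m v) j 0); last by rewrite Hv mxE.
  rewrite !mxE; apply: eq_bigr => i _; rewrite !mxE; by case: (i \in S); rewrite ?mulr0 ?mul0r.
- apply/subsetP => i; rewrite inE mxE; by case: (i \in S).
- move: Hcv; rewrite mxE; congr (_ != _).
  apply: eq_bigr => i _; rewrite !mxE; case: (i \in S); by rewrite ?mulr0 ?mul0r // mulrC.
Qed.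


Lemma supp_inj n : injective (@supp n).
Proof.
move=> s s' H; apply/matrixP => i j; rewrite ord1.
have := congr1 (fun A : {set 'I_n} => i \in A) H; rewrite /= !inE.
by case: (F2_cases (s i 0)) => ->; case: (F2_cases (s' i 0)) => ->.
Qed.

Lemma stuck_supp n (S : {set 'I_n}) s : stuck_on S s = (supp s \subset S).
Proof.
apply/forallP/subsetP => H i.
  rewrite inE => Hs; apply/negPn/negP => iS; move: (H i); rewrite iS /=.
  by rewrite (negbTE Hs).
apply/implyP => iS; apply/negPn/negP => Hs.
by move: (H i); rewrite inE => /(_ Hs); rewrite (negbTE iS).
Qed.

Lemma card_stuck n (S : {set 'I_n}) :
  #|[set s : 'cV['F_2]_n | stuck_on S s]| = (2 ^ #|S|)%N.
Proof.
rewrite -card_powerset -(card_imset _ (@supp_inj n)); apply: eq_card => A.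
rewrite powersetE; apply/imsetP/idP.
  by move=> [s]; rewrite inE stuck_supp => H ->.
move=> HA; exists (\col_i (if i \in A then 1 else 0)).
  rewrite inE stuck_supp; apply: subset_trans HA; apply/subsetP => i.
  by rewrite inE mxE; case: (i \in A).
apply/setP => i; rewrite inE mxE; by case: (i \in A).
Qed.

Lemma setUDT (I : finType) (T S : {set I}) : T \subset S -> T :|: (S :\: T) = S.
Proof.
move=> H; apply/setP => x; rewrite !inE; case xT: (x \in T) => //=.
by rewrite (subsetP H x xT).
Qed.

Lemma card_sup n (T : {set 'I_n}) u : (#|T| <= u)%N ->
  #|[set S : {set 'I_n} | (#|S| == u) && (T \subset S)]| = 'C(n - #|T|, u - #|T|).
Proof.
move=> Tu.
have Ccard : #|~: T| = (n - #|T|)%N by rewrite cardsCs setCK card_ord.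
rewrite -Ccard -cards_draws.
set X := [set S : {set 'I_n} | _].
rewrite -(@card_in_imset _ _ (fun S => S :\: T) X).
  apply: eq_card => A; rewrite inE; apply/imsetP/idP.
    move=> [S]; rewrite inE => /andP [/eqP HS TS] ->.
    by rewrite subsetDr cardsDS // HS eqxx.
  move=> /andP [HA /eqP HAc]; exists (T :|: A).
    rewrite inE subsetUl andbT cardsU HAc.
    have -> : T :&: A = set0.
      apply/setP => x; rewrite !inE; apply/negP => /andP [xT xA].
      by move: (subsetP HA x xA); rewrite inE xT.
    rewrite cards0 subn0; apply/eqP; lia.
  apply/setP => x; rewrite !inE; case xT: (x \in T) => //=.
    by case xA: (x \in A) => //; move: (subsetP HA x xA); rewrite inE xT.
move=> S1 S2; rewrite !inE => /andP [_ H1] /andP [_ H2] HD.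
by rewrite -(setUDT H1) /= HD setUDT.
Qed.


Lemma F2_neq0 (x : 'F_2) : x != 0 -> x = 1.
Proof. by case: (F2_cases x) => ->. Qed.

Lemma F2_add1 (x : 'F_2) : (x + 1 != 0) = (x == 0).
Proof. by case: (F2_cases x) => ->; rewrite ?add0r ?F2_11. Qed.

Definition Dset n l (G0 : 'M['F_2]_(n, l)) (S : {set 'I_n}) :=
  [set z : 'cV['F_2]_n | [&& in_dual G0 z, z != 0 & supp z \subset S]].

Definition Fset n l k (G0 : 'M['F_2]_(n, l)) (G1 : 'M['F_2]_(n, k))
  (m : 'cV['F_2]_k) (S : {set 'I_n}) :=
  [set s : 'cV['F_2]_n | stuck_on S s & ~~ encodable G0 G1 m S s].

Lemma card_sum (I : finType) (P : pred I) : #|[set i | P i]| = (\sum_i (P i : nat))%N.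
Proof.
rewrite -sum1_card big_mkcond; apply: eq_bigr => i _; rewrite inE; by case: (P i).
Qed.

Lemma card_sumS (I : finType) (S : {set I}) : #|S| = (\sum_i ((i \in S) : nat))%N.
Proof.
rewrite -sum1_card big_mkcond; apply: eq_bigr => i _; by case: (i \in S).
Qed.

Lemma nz_sum n (z : 'cV['F_2]_n) (b : 'cV['F_2]_n) :
  \sum_i z i 0 * b i 0 != 0 -> z != 0.
Proof.
apply: contra => /eqP ->; apply/eqP; apply: big1 => i _; by rewrite mxE mul0r.
Qed.

Lemma Fset_empty n l k (G0 : 'M['F_2]_(n, l)) (G1 : 'M['F_2]_(n, k)) m S :
  Dset G0 S = set0 -> Fset G0 G1 m S = set0.
Proof.
move=> HD; apply/setP => s; rewrite !inE; apply/negP => /andP [_ Hne].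
have [z [Hz Hs Hsum]] := enc_complete Hne.
have : z \in Dset G0 S.
  rewrite inE Hz Hs andbT /=.
  apply: (@nz_sum _ _ (G1 *m m + s)).
  suff -> : \sum_i z i 0 * (G1 *m m + s) i 0 = \sum_i z i 0 * ((G1 *m m) i 0 + s i 0) by [].
  by apply: eq_bigr => i _; rewrite [(G1 *m m + s) i 0]mxE.
by rewrite HD inE.
Qed.

Lemma Fset_le n l k (G0 : 'M['F_2]_(n, l)) (G1 : 'M['F_2]_(n, k)) m S :
  (#|Fset G0 G1 m S| <= 2 ^ #|S|)%N.
Proof.
rewrite -card_stuck; apply: subset_leq_card; apply/subsetP => s.
by rewrite !inE => /andP [].
Qed.

Lemma Fset_le2 n l k (G0 : 'M['F_2]_(n, l)) (G1 : 'M['F_2]_(n, k)) m S :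
  (#|Fset G0 G1 m S| <= 2 ^ #|S| * #|Dset G0 S|)%N.
Proof.
have [HD|HD] := eqVneq (Dset G0 S) set0.
  by rewrite (Fset_empty G1 m HD) cards0.
have := Fset_le G0 G1 m S; move=> /leq_trans; apply.
have : (0 < #|Dset G0 S|)%N by rewrite card_gt0.
by move: #|Dset G0 S| => d Hd; rewrite -{1}[(2 ^ _)%N]muln1 leq_mul2l Hd orbT.
Qed.

Lemma wt_supp n (z : 'cV['F_2]_n) : wt z = #|supp z|.
Proof. by []. Qed.

Lemma wt_le n (z : 'cV['F_2]_n) (S : {set 'I_n}) : supp z \subset S -> (wt z <= #|S|)%N.
Proof. move=> H; rewrite wt_supp; exact: subset_leq_card. Qed.

Lemma Dset_small n l (G0 : 'M['F_2]_(n, l)) d0 (S : {set 'I_n})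
  (Hd0_min : forall x : 'cV['F_2]_n, in_dual G0 x -> x != 0 -> (d0 <= wt x)%N) :
  (#|S| < d0)%N -> Dset G0 S = set0.
Proof.
move=> HS; apply/setP => z; rewrite !inE; apply/negP => /and3P [Hz Hz0 Hs].
have := leq_trans (Hd0_min z Hz Hz0) (wt_le Hs); lia.
Qed.

Lemma wt3 n (z1 z2 : 'cV['F_2]_n) (S : {set 'I_n}) : supp z1 \subset S -> supp z2 \subset S ->
  (wt z1 + wt z2 + wt (z1 - z2) <= 2 * #|S|)%N.
Proof.
move=> H1 H2; rewrite /wt !card_sum card_sumS -!big_split /= big_distrr /=.
apply: leq_sum => i _; rewrite !mxE.
case: (boolP (i \in S)) => iS.
  by case: (F2_cases (z1 i 0)) => ->; case: (F2_cases (z2 i 0)) => ->.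
by rewrite (supp0 H1 iS) (supp0 H2 iS) subrr.
Qed.

Lemma Dset_le1 n l (G0 : 'M['F_2]_(n, l)) d0 (S : {set 'I_n})
  (Hd0_min : forall x : 'cV['F_2]_n, in_dual G0 x -> x != 0 -> (d0 <= wt x)%N) :
  (2 * #|S| < 3 * d0)%N -> (#|Dset G0 S| <= 1)%N.
Proof.
move=> HS; rewrite leqNgt; apply/negP => /card_gt1P [z1 [z2 [H1 H2 Hne]]].
move: H1 H2; rewrite !inE => /and3P [Hz1 Hz10 Hs1] /and3P [Hz2 Hz20 Hs2].
have Hd : in_dual G0 (z1 - z2).
  by move: Hz1 Hz2; rewrite /in_dual mulmxBr => /eqP -> /eqP ->; rewrite subrr.
have Hnz : z1 - z2 != 0 by rewrite subr_eq0.
have := Hd0_min _ Hz1 Hz10; have := Hd0_min _ Hz2 Hz20; have := Hd0_min _ Hd Hnz.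
have := wt3 Hs1 Hs2; move=> Hw h3 h2 h1; have := leq_trans (leq_add (leq_add h1 h2) h3) Hw.
move: HS; move: (d0) (#|S|) => a b; lia.
Qed.

Lemma Fset_half n l k (G0 : 'M['F_2]_(n, l)) (G1 : 'M['F_2]_(n, k)) m
  (S : {set 'I_n}) z0 :
  Dset G0 S = [set z0] -> (2 * #|Fset G0 G1 m S| = 2 ^ #|S|)%N.
Proof.
move=> HD.
have : z0 \in Dset G0 S by rewrite HD set11.
rewrite inE => /and3P [Hz0d Hz00 Hs0].
have [i0 Hi0] : exists i0, z0 i0 0 != 0.
  apply/existsP; apply: contraR Hz00 => /existsPn Hn.
  apply/eqP/matrixP => i j; rewrite ord1 mxE.
  by move: (Hn i); rewrite negbK => /eqP.
have i0S : i0 \in S by apply: (subsetP Hs0); rewrite inE.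
have z0i : z0 i0 0 = 1 by apply: F2_neq0.
pose f (s : 'cV['F_2]_n) := \sum_i z0 i 0 * ((G1 *m m) i 0 + s i 0).
have HF : Fset G0 G1 m S = [set s | stuck_on S s] :&: [set s | f s != 0].
  apply/setP => s; rewrite !inE; case: (stuck_on S s) => //=; apply/idP/idP.
    move=> Hne; have [z [Hz Hs Hsum]] := enc_complete Hne.
    have : z \in Dset G0 S.
      rewrite inE Hz Hs andbT /=.
      apply: (@nz_sum _ _ (G1 *m m + s)).
      suff -> : \sum_i z i 0 * (G1 *m m + s) i 0 = \sum_i z i 0 * ((G1 *m m) i 0 + s i 0) by [].
      by apply: eq_bigr => i _; rewrite [(G1 *m m + s) i 0]mxE.
    by rewrite HD => /set1P Hzz; rewrite /f -Hzz.
  move=> Hf; apply/negP => Henc; move: Hf.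
  by rewrite /f (enc_sound Henc Hz0d Hs0) eqxx.
pose g (s : 'cV['F_2]_n) := s + delta_mx i0 0.
have ginj : injective g by move=> s1 s2; apply: addIr.
have gst : forall s, stuck_on S (g s) = stuck_on S s.
  move=> s; apply/forallP/forallP => H i; apply/implyP => iS; move: (implyP (H i) iS);
    rewrite !mxE; have -> : (i == i0) = false by apply/negP => /eqP Hi; move: iS; rewrite Hi i0S.
    by rewrite /= addr0.
  by rewrite /= addr0.
have gf : forall s, f (g s) = f s + 1.
  move=> s; rewrite /f (bigD1 i0) //= [in RHS](bigD1 i0) //=.
  have -> : \sum_(i | i != i0) z0 i 0 * ((G1 *m m) i 0 + g s i 0) =
            \sum_(i | i != i0) z0 i 0 * ((G1 *m m) i 0 + s i 0).
    apply: eq_bigr => i Hi; rewrite /g [(s + _) i 0]mxE [delta_mx _ _ _ _]mxE.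
    by rewrite (negbTE Hi) /= addr0.
  rewrite /g [(s + _) i0 0]mxE [delta_mx _ _ _ _]mxE !eqxx /= z0i !mul1r.
  ring.
have sub1 : g @: ([set s | stuck_on S s] :&: [set s | f s != 0]) \subset
            [set s | stuck_on S s] :\: [set s | f s != 0].
  apply/subsetP => t /imsetP [s]; rewrite !inE => /andP [Hs Hf] ->.
  by rewrite gst Hs gf F2_add1 Hf.
have sub2 : g @: ([set s | stuck_on S s] :\: [set s | f s != 0]) \subset
            [set s | stuck_on S s] :&: [set s | f s != 0].
  apply/subsetP => t /imsetP [s]; rewrite !inE => /andP [Hf Hs] ->.
  by rewrite gst Hs gf F2_add1 -(negbK (f s == 0)) Hf.
have le1 := subset_leq_card sub1; have le2 := subset_leq_card sub2.
rewrite !card_imset // in le1 le2.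
rewrite HF -(card_stuck S) -[in RHS](cardsID [set s | f s != 0] [set s | stuck_on S s]).
move: le1 le2; move: #|_ :&: _| #|_ :\: _| => a b; lia.
Qed.

Lemma Fset_case2 n l k (G0 : 'M['F_2]_(n, l)) (G1 : 'M['F_2]_(n, k)) m
  (S : {set 'I_n}) :
  (#|Dset G0 S| <= 1)%N -> (2 * #|Fset G0 G1 m S| = 2 ^ #|S| * #|Dset G0 S|)%N.
Proof.
rewrite leq_eqVlt ltnS leqn0 => /orP [/cards1P [z0 HD]|/eqP /cards0_eq HD].
  by rewrite (Fset_half G1 m HD) HD cards1 muln1.
by rewrite (Fset_empty G1 m HD) cards0 HD cards0 !muln0.
Qed.


Lemma sum_pick a b x (F : nat -> nat) :
  (\sum_(a <= w < b) (if w == x then F w else 0) = if (a <= x < b) then F x else 0)%N.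
Proof.
elim: b => [|b IH]; first by rewrite big_geq // ltn0 andbF.
have [ab|ba] := leqP a b.
  rewrite big_nat_recr //= IH.
  case: (eqVneq b x) => [<-|bx].
    repeat (case: ifP => ?); rewrite ?addn0 ?add0n //; lia.
  repeat (case: ifP => ?); rewrite ?addn0 ?add0n //; lia.
rewrite big_geq //; case: ifP => // /andP [h1 h2]; lia.
Qed.

Lemma wt0 n : wt (0 : 'cV['F_2]_n) = 0%N.
Proof. by apply: eq_card0 => i; rewrite inE mxE eqxx. Qed.

Lemma dcount n l (G0 : 'M['F_2]_(n, l)) d0 u
  (Hd0_min : forall x : 'cV['F_2]_n, in_dual G0 x -> x != 0 -> (d0 <= wt x)%N)
  (Hd0pos : (1 <= d0)%N) :
  (\sum_(S : {set 'I_n} | #|S| == u) #|Dset G0 S| =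
   \sum_(d0 <= w < u.+1) B0 G0 w * 'C(n - w, u - w))%N.
Proof.
transitivity (\sum_(z : 'cV['F_2]_n)
   (if in_dual G0 z && (d0 <= wt z < u.+1) then 'C(n - wt z, u - wt z) else 0))%N.
  rewrite (eq_bigr (fun S : {set 'I_n} => \sum_z ((in_dual G0 z && (z != 0%R) && (supp z \subset S)) : nat))%N);
    last by move=> S _; rewrite /Dset card_sum; apply: eq_bigr => z _; rewrite andbA.
  rewrite exchange_big /=; apply: eq_bigr => z _.
  case Hz: (in_dual G0 z) => /=; last by rewrite big1.
  have [->|Hz0] := eqVneq z 0.
    rewrite big1 // wt0; by move: Hd0pos; case: (d0).
  rewrite (Hd0_min z Hz Hz0) /=.
  transitivity #|[set S : {set 'I_n} | (#|S| == u) && (supp z \subset S)]|.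
    rewrite card_sum big_mkcond /=; apply: eq_bigr => S _; by case: (#|S| == u).
  rewrite ltnS; case: leqP => Hwu; first by rewrite card_sup.
  apply: eq_card0 => S; rewrite inE; apply/negP => /andP [/eqP HS Hs].
  have := wt_le Hs; lia.
rewrite (eq_bigr (fun w => \sum_z (if w == wt z then (in_dual G0 z : nat) * 'C(n - wt z, u - wt z) else 0))%N);
  last first.
  move=> w _; rewrite /B0 card_sum big_distrl /=; apply: eq_bigr => z _.
  case: (eqVneq w (wt z)) => [->|H]; by rewrite ?andbT ?andbF.
rewrite exchange_big /=; apply: eq_bigr => z _.
rewrite sum_pick; case: (in_dual G0 z) => /=; first by rewrite mul1n.
by case: ifP.
Qed.


Unset Implicit Arguments. Set Strict Implicit.

Theorem theorem2 (n l k : nat) (G0 : 'M['F_2]_(n, l)) (G1 : 'M['F_2]_(n, k))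
  (m : 'cV['F_2]_k) (d0 : nat)
  (Hd0_attained : exists x : 'cV['F_2]_n, [/\ in_dual G0 x, x != 0 & wt x = d0])
  (Hd0_min : forall x : 'cV['F_2]_n, in_dual G0 x -> x != 0 -> (d0 <= wt x)%N)
  (u : nat) (Hu1 : (1 <= u)%N) (Hun : (u <= n)%N) :
  let t0 := (d0.-1)./2 in
  [/\ (u < d0)%N -> P_fail G0 G1 m u = 0,
      (d0 <= u <= d0 + t0)%N -> P_fail G0 G1 m u = 2^-1 * ratio_bound G0 d0 u
    & (d0 + t0 < u)%N -> P_fail G0 G1 m u <= Num.min (ratio_bound G0 d0 u) 1].
Proof.
move=> t0.
have Hd0pos : (1 <= d0)%N.
  case: Hd0_attained => x [Hx Hx0 <-].
  rewrite lt0n; apply: contra Hx0 => /eqP /cards0_eq H.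
  apply/eqP/matrixP => i j; rewrite ord1 mxE; apply/eqP/negPn/negP => Hi.
  by have := congr1 (fun A : {set 'I_n} => i \in A) H; rewrite /= !inE Hi.
have FC : fail_count G0 G1 m u = (\sum_(S : {set 'I_n} | #|S| == u) #|Fset G0 G1 m S|)%N
  by [].
have DC := dcount u Hd0_min Hd0pos.
set N := (\sum_(d0 <= w < u.+1) B0 G0 w * 'C(n - w, u - w))%N in DC.
have Cpos : (0 < 'C(n, u))%N by rewrite bin_gt0.
have Cne : ('C(n, u))%:R != 0 :> rat by rewrite pnatr_eq0 -lt0n.
have Pne : (2 ^ u)%:R != 0 :> rat by rewrite pnatr_eq0 -lt0n expn_gt0.
have Hratio : ratio_bound G0 d0 u = N%:R / ('C(n, u))%:R by [].
split.
- move=> Hud; rewrite /P_fail FC big1 ?mul0r // => S /eqP HS.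
  by rewrite (Fset_empty G1 m (Dset_small Hd0_min _)) ?cards0 // HS.
- move=> /andP [Hdu Hut].
  have H2 : (2 * fail_count G0 G1 m u = 2 ^ u * N)%N.
    rewrite FC big_distrr -DC big_distrr /=; apply: eq_bigr => S /eqP HS.
    rewrite Fset_case2 ?HS //; apply: (Dset_le1 Hd0_min).
    have : (t0.*2 <= d0.-1)%N by rewrite -[in X in (_ <= X)%N](odd_double_half d0.-1) leq_addl.
    rewrite -muln2 HS; lia.
  rewrite /P_fail Hratio.
  have -> : (fail_count G0 G1 m u)%:R = ((2 ^ u * N)%N)%:R / 2 :> rat.
    by rewrite -H2 natrM; field.
  by rewrite !natrM; field; rewrite Cne Pne.
- move=> Hut.
  have H1 : (fail_count G0 G1 m u <= 2 ^ u * N)%N.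
    rewrite FC -DC big_distrr /=; apply: leq_sum => S /eqP HS.
    by rewrite -HS Fset_le2.
  have H2 : (fail_count G0 G1 m u <= 'C(n, u) * 2 ^ u)%N.
    rewrite FC; apply: (@leq_trans (\sum_(S : {set 'I_n} | #|S| == u) 2 ^ u)%N).
      by apply: leq_sum => S /eqP HS; rewrite -HS Fset_le.
    rewrite -[n in 'C(n, u)]card_ord -(card_draws 'I_n u) -sum_nat_const.
    by rewrite leq_eqVlt; apply/orP; left; apply/eqP; apply: eq_bigl => S; rewrite inE.
  have Dpos : 0 < ('C(n, u) * 2 ^ u)%:R :> rat by rewrite ltr0n muln_gt0 Cpos expn_gt0.
  rewrite le_min /P_fail Hratio !ler_pdivrMr //; apply/andP; split.
    rewrite (_ : _ * _ = ((2 ^ u * N)%N)%:R); first by rewrite ler_nat.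
    rewrite !natrM; field; done.
  by rewrite mul1r ler_nat.
Qed.
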